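(* Let $\Gamma$ be an immersed, connected, $C^2$ planar curve with total curvature $\int_\Gamma|\kappa|\,ds\le\pi/4$. Then $\mathrm{Ent}[\Gamma]\le\sqrt{2}$.
   Context: $\kappa$ is the signed curvature and $ds$ arc length. For a curve $\Gamma$, $F_{x_0,\lambda}[\Gamma]=\frac{1}{\sqrt{4\pi\lambda}}\int_\Gamma e^{-|x-x_0|^2/(4\lambda)}\,ds$ (integral over the parametrization) and $\mathrm{Ent}[\Gamma]=\sup_{x_0\in\mathbb{R}^2,\lambda>0}F_{x_0,\lambda}[\Gamma]$. *)

(* Defs.v *)
From mathcomp Require Import all_boot all_order all_algebra.
From mathcomp Require Import all_classical all_reals all_analysis.
Set Implicit Arguments. Unset Strict Implicit. Unset Printing Implicit Defensive.
Import Order.TTheory GRing.Theory Num.Theory numFieldNormedType.Exports.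
Local Open Scope classical_set_scope.
Local Open Scope ring_scope.

Section Curves.
Variable R : realType.

(* A planar curve Gamma is given by a parameter interval I (open, nonempty,
   connected, possibly unbounded) and coordinate functions x, y : R -> R
   (only their values on I matter).  *)
Definition C2_immersed_curve (I : set R) (x y : R -> R) : Prop :=
  [/\ open I, is_interval I, I !=set0 &
    forall t, I t ->
      [/\ derivable x t 1 /\ derivable y t 1,
          derivable (derive1 x) t 1 /\ derivable (derive1 y) t 1,
          {for t, continuous (derive1n 2 x)} /\ {for t, continuous (derive1n 2 y)} &
          ((derive1 x) t) ^+ 2 + ((derive1 y) t) ^+ 2 != 0]].

Definition speed (x y : R -> R) (t : R) : R :=
  Num.sqrt (((derive1 x) t) ^+ 2 + ((derive1 y) t) ^+ 2).

Definition curvature (x y : R -> R) (t : R) : R :=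
  ((derive1 x) t * (derive1n 2 y) t - (derive1 y) t * (derive1n 2 x) t) / (speed x y t) ^+ 3.

Definition total_curvature (I : set R) (x y : R -> R) : \bar R :=
  (\int[lebesgue_measure]_(t in I) (`|curvature x y t| * speed x y t)%:E)%E.

Definition Ffun (I : set R) (x y : R -> R) (p q lam : R) : \bar R :=
  ((Num.sqrt (4 * pi * lam))^-1%:E *
   \int[lebesgue_measure]_(t in I)
      (expR (- (((x t - p) ^+ 2 + (y t - q) ^+ 2) / (4 * lam))) * speed x y t)%:E)%E.

Definition Ent (I : set R) (x y : R -> R) : \bar R :=
  ereal_sup [set v | exists (p q lam : R), 0 < lam /\ v = Ffun I x y p q lam].
End Curves.

(* Main.v *)
Set Warnings "-notation-overridden,-ambiguous-paths,-notation-incompatible-prefix".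
Require Import Defs.
From mathcomp Require Import all_boot all_order all_algebra.
From mathcomp Require Import all_classical all_reals all_analysis.
From mathcomp Require Import measurable_realfun ftc gauss_integral realfun derive.
From mathcomp Require Import ring lra.
Set Implicit Arguments. Unset Strict Implicit. Unset Printing Implicit Defensive.
Import Order.TTheory GRing.Theory Num.Theory numFieldNormedType.Exports.
Local Open Scope classical_set_scope.
Local Open Scope ring_scope.

Section Exhaust.
Variables (R : realType) (I : set R).
Hypotheses (Iop : open I) (Iitv : is_interval I).
Notation mu := (@lebesgue_measure R).

Let dn (n : nat) : R := n.+1%:R^-1.
Let dn_gt0 n : 0 < dn n. Proof. by rewrite /dn invr_gt0. Qed.

Definition Jn (n : nat) := [set t | I (t - dn n) /\ I (t + dn n) /\ - n%:R <= t <= n%:R].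

Lemma Jn_itv n : is_interval (Jn n).
Proof.
move=> u v [Iu1 [Iu2 /andP[u1 u2]]] [Iv1 [Iv2 /andP[v1 v2]]] z /andP[uz zv].
split; [|split].
- by apply: (Iitv Iu1 Iv1); rewrite !lerD2r uz zv.
- by apply: (Iitv Iu2 Iv2); rewrite !lerD2r uz zv.
- by apply/andP; split; [exact: le_trans u1 uz | exact: le_trans zv v2].
Qed.

Lemma Jn_I n t : Jn n t -> I t.
Proof.
move=> [I1 [I2 _]]; apply: (Iitv I1 I2).
by have := dn_gt0 n; rewrite !lerBlDr; lra.
Qed.

Lemma Jn_nd : nondecreasing_seq Jn.
Proof.
apply/nondecreasing_seqP => n; rewrite subsetEset => t [I1 [I2 /andP[t1 t2]]].
have d12 : dn n.+1 <= dn n.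
  by rewrite /dn lef_pV2 ?posrE ?ltr0n // ler_nat.
have d0 := dn_gt0 n.+1.
split; [|split].
- by apply: (Iitv I1 I2); apply/andP; split; lra.
- by apply: (Iitv I1 I2); apply/andP; split; lra.
- apply/andP; split.
  + by apply: le_trans t1; rewrite lerN2 ler_nat.
  + by apply: le_trans t2 _; rewrite ler_nat.
Qed.

Lemma bigcup_Jn : \bigcup_n Jn n = I.
Proof.
apply/seteqP; split => [t [n _ /Jn_I //]|t It].
have : nbhs t I by rewrite nbhsE /=; exists I.
case/nbhs_ballP => e /= e0 He.
have H : \forall n \near \oo, Jn n t.
  near=> n; split; [|split].
  - apply: He; rewrite /ball /= (_ : t - (t - dn n) = dn n); last by ring.
    rewrite ger0_norm ?ltW ?dn_gt0 //.
    near: n; exact: (near_infty_natSinv_lt (PosNum e0)).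
  - apply: He; rewrite /ball /= (_ : t - (t + dn n) = - dn n); last by ring.
    rewrite normrN ger0_norm ?ltW ?dn_gt0 //.
    near: n; exact: (near_infty_natSinv_lt (PosNum e0)).
  - rewrite -ler_norml; near: n; exact: nbhs_infty_ger.
have [N _ HN] := H.
by exists N => //; apply: HN => /=.
Unshelve. all: by end_near.
Qed.

Lemma exhaust (f : R -> R) (C : \bar R) : (forall t, I t -> 0 <= f t) ->
  measurable_fun I f -> (0 <= C)%E ->
  (forall a b, I a -> I b -> a <= b -> (\int[mu]_(t in `[a, b]) (f t)%:E <= C)%E) ->
  (\int[mu]_(t in I) (f t)%:E <= C)%E.
Proof.
move=> f0 mf C0 H.
have mI : measurable I := is_interval_measurable Iitv.
have mJ : forall n, measurable (Jn n) := fun n => is_interval_measurable (@Jn_itv n).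
have mfJ : forall n, measurable_fun (Jn n) (fun t => (f t)%:E).
  move=> n; apply: (measurable_funS mI); first by move=> t /Jn_I.
  exact/measurable_EFinP.
have f0J : forall n t, Jn n t -> (0 <= (fun t => (f t)%:E) t)%E.
  by move=> n t /Jn_I It; rewrite lee_fin f0.
have cv : (\int[mu]_(x in Jn i) (f x)%:E)%E @[i --> \oo] -->
    (\int[mu]_(x in \bigcup_i Jn i) (f x)%:E)%E.
  apply: ge0_nondecreasing_set_cvg_integral.
  all: try done.
  exact: Jn_nd.
rewrite -bigcup_Jn -(cvg_lim _ cv) //.
apply: lime_le; first by apply/cvg_ex; eexists; exact: cv.
apply: nearW => n /=.
have [ne|emp] := pselect (Jn n !=set0); last first.
  by rewrite (_ : Jn n = set0) ?integral_set0 //; apply/seteqP; split => // t Jt; apply: emp; exists t.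
have hl : has_lbound (Jn n) by exists (- n%:R) => t [_ [_ /andP[]]].
have hu : has_ubound (Jn n) by exists (n%:R) => t [_ [_ /andP[]]].
set a := inf (Jn n); set b := sup (Jn n).
have Ia : I a.
  have [t Jt ta] := inf_adherent (dn_gt0 n) (conj ne hl).
  have [I1 _] := Jt.
  apply: (Iitv I1 (Jn_I Jt)); apply/andP; split; last exact: ge_inf.
  by rewrite lerBlDr ltW.
have Ib : I b.
  have [t Jt ta] := sup_adherent (dn_gt0 n) (conj ne hu).
  have [_ [I2 _]] := Jt.
  apply: (Iitv (Jn_I Jt) I2); apply/andP; split; first exact: ub_le_sup.
  by rewrite -lerBlDr ltW.
have sub : Jn n `<=` `[a, b].
  by move=> t Jt; rewrite /= in_itv /=; apply/andP; split; [exact: ge_inf | exact: ub_le_sup].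
have ab : a <= b by case: ne => t /sub; rewrite /= in_itv /= => /andP[h1 h2]; exact: le_trans h1 h2.
apply: le_trans (H a b Ia Ib ab).
apply: ge0_subset_integral => //.
- exact: mJ.
- apply: (measurable_funS mI); last exact/measurable_EFinP.
  by move=> t; rewrite /= => tab; apply: (Iitv Ia Ib).
- move=> t; rewrite /= in_itv /= => tab; rewrite lee_fin f0 //.
  exact: (Iitv Ia Ib).
Qed.

End Exhaust.

Section Basic.
Variables (R : realType) (I : set R) (x y : R -> R).
Hypothesis HC : C2_immersed_curve I x y.

Lemma I_open : open I. Proof. by case: HC. Qed.
Lemma I_itv : is_interval I. Proof. by case: HC. Qed.
Lemma I_meas : measurable I. Proof. exact: is_interval_measurable I_itv. Qed.

Lemma I_near t : I t -> \forall z \near t, I z.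
Proof. by move=> It; have := I_open; rewrite openE => /(_ t It). Qed.

Let HCt t : I t -> _ := fun It => (let: And4 _ _ _ h := HC in h t It).

Lemma dx t : I t -> derivable x t 1.
Proof. by move=> It; case: (HCt It) => -[]. Qed.
Lemma dy t : I t -> derivable y t 1.
Proof. by move=> It; case: (HCt It) => -[]. Qed.
Lemma ddx t : I t -> derivable (derive1 x) t 1.
Proof. by move=> It; case: (HCt It) => _ []. Qed.
Lemma ddy t : I t -> derivable (derive1 y) t 1.
Proof. by move=> It; case: (HCt It) => _ []. Qed.
Lemma d2E (f : R -> R) : derive1n 2 f = derive1 (derive1 f).
Proof. by rewrite derive1nS derive1n1. Qed.
Lemma cddx t : I t -> {for t, continuous (derive1 (derive1 x))}.
Proof. move=> It; case: (HCt It) => _ _ [h _] _; rewrite -d2E; exact: h. Qed.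
Lemma cddy t : I t -> {for t, continuous (derive1 (derive1 y))}.
Proof. move=> It; case: (HCt It) => _ _ [_ h] _; rewrite -d2E; exact: h. Qed.
Lemma S_neq0 t : I t -> (derive1 x t) ^+ 2 + (derive1 y t) ^+ 2 != 0.
Proof. by move=> It; case: (HCt It). Qed.

Lemma cont_of_der (f : R -> R) t : derivable f t 1 -> {for t, continuous f}.
Proof. by move=> df; apply/differentiable_continuous/derivable1_diffP. Qed.

Lemma S_gt0 t : I t -> 0 < (derive1 x t) ^+ 2 + (derive1 y t) ^+ 2.
Proof. by move=> It; rewrite lt_neqAle eq_sym S_neq0 //= addr_ge0 // sqr_ge0. Qed.

Lemma speed_gt0 t : I t -> 0 < speed x y t.
Proof. by move=> It; rewrite /speed sqrtr_gt0 S_gt0. Qed.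


Notation X1 := (derive1 x).
Notation Y1 := (derive1 y).
Notation X2 := (derive1 (derive1 x)).
Notation Y2 := (derive1 (derive1 y)).
Notation s := (speed x y).

Lemma isdX1 t : I t -> is_derive t 1 X1 (X2 t).
Proof. by move=> It; rewrite derive1E; apply: derivableP; exact: ddx. Qed.
Lemma isdY1 t : I t -> is_derive t 1 Y1 (Y2 t).
Proof. by move=> It; rewrite derive1E; apply: derivableP; exact: ddy. Qed.

Lemma sE t : s t = Num.sqrt (X1 t ^+ 2 + Y1 t ^+ 2). Proof. by []. Qed.
Lemma s2E t : I t -> s t ^+ 2 = X1 t ^+ 2 + Y1 t ^+ 2.
Proof. by move=> It; rewrite sE sqr_sqrtr // ltW // S_gt0. Qed.

Lemma isdQ t : I t -> is_derive t 1 (fun u => X1 u ^+ 2 + Y1 u ^+ 2)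
  (2 * (X1 t * X2 t + Y1 t * Y2 t)).
Proof.
move=> It.
have h := is_deriveD (is_deriveX 2 (isdX1 It)) (is_deriveX 2 (isdY1 It)).
have -> : (fun u => X1 u ^+ 2 + Y1 u ^+ 2) = X1 ^+ 2 + Y1 ^+ 2.
  by apply/funext => u /=; rewrite !fctE.
set v := (X in is_derive _ _ _ X) in h.
suff -> : 2 * (X1 t * X2 t + Y1 t * Y2 t) = v by [].
rewrite /v /= !expr1 /GRing.scale /=.
move: (X1 t) (Y1 t) (X2 t) (Y2 t) => A B A2 B2; ring.
Qed.

Lemma isds t : I t -> is_derive t 1 s ((X1 t * X2 t + Y1 t * Y2 t) / s t).
Proof.
move=> It.
have h := @is_derive1_comp _ Num.sqrt (fun u => X1 u ^+ 2 + Y1 u ^+ 2) t _ _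
  (is_derive1_sqrt (S_gt0 It)) (isdQ It).
have -> : s = Num.sqrt \o (fun u => X1 u ^+ 2 + Y1 u ^+ 2) by [].
set v := (X in is_derive _ _ _ X) in h.
suff -> : (X1 t * X2 t + Y1 t * Y2 t) / s t = v by [].
rewrite /v -sE.
have := speed_gt0 It.
move: (X1 t) (Y1 t) (X2 t) (Y2 t) (s t) => A B A2 B2 S S0.
by field; rewrite gt_eqF.
Qed.


Definition Wr t := X1 t * Y2 t - Y1 t * X2 t.

Lemma isdinvs t : I t -> is_derive t 1 (fun u => (s u)^-1)
   (- (s t) ^- 2 * ((X1 t * X2 t + Y1 t * Y2 t) / s t)).
Proof.
move=> It; have h := @is_deriveV _ s t _ 1 (lt0r_neq0 (speed_gt0 It)) (isds It).
set v := (X in is_derive _ _ _ X) in h.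
suff -> : - (s t) ^- 2 * ((X1 t * X2 t + Y1 t * Y2 t) / s t) = v by [].
by rewrite /v.
Qed.

Lemma isdT1 t : I t -> is_derive t 1 (fun u => X1 u / s u) (- Y1 t * Wr t / s t ^+ 3).
Proof.
move=> It; have h := is_deriveM (isdX1 It) (isdinvs It).
have -> : (fun u => X1 u / s u) = X1 * (fun u => (s u)^-1) by [].
set v := (X in is_derive _ _ _ X) in h.
suff -> : - Y1 t * Wr t / s t ^+ 3 = v by [].
rewrite /v /Wr /GRing.scale /=.
have S0 := speed_gt0 It; have S2 := s2E It; have Q0 := S_gt0 It.
move: (X1 t) (Y1 t) (X2 t) (Y2 t) (s t) S0 S2 Q0 => A B A2 B2 S S0 S2 Q0.
rewrite [S ^+ 3]exprS mulrC S2.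
by field; rewrite !gt_eqF.
Qed.

Lemma isdT2 t : I t -> is_derive t 1 (fun u => Y1 u / s u) (X1 t * Wr t / s t ^+ 3).
Proof.
move=> It; have h := is_deriveM (isdY1 It) (isdinvs It).
have -> : (fun u => Y1 u / s u) = Y1 * (fun u => (s u)^-1) by [].
set v := (X in is_derive _ _ _ X) in h.
suff -> : X1 t * Wr t / s t ^+ 3 = v by [].
rewrite /v /Wr /GRing.scale /=.
have S0 := speed_gt0 It; have S2 := s2E It; have Q0 := S_gt0 It.
move: (X1 t) (Y1 t) (X2 t) (Y2 t) (s t) S0 S2 Q0 => A B A2 B2 S S0 S2 Q0.
rewrite [S ^+ 3]exprS mulrC S2.
by field; rewrite !gt_eqF.
Qed.

Definition gD (D1 D2 : R) u := D1 * (X1 u / s u) + D2 * (Y1 u / s u).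

Lemma isdg D1 D2 t : I t ->
  is_derive t 1 (gD D1 D2) (Wr t * (D2 * X1 t - D1 * Y1 t) / s t ^+ 3).
Proof.
move=> It.
have h := is_deriveD (is_deriveZ D1 (isdT1 It)) (is_deriveZ D2 (isdT2 It)).
have -> : gD D1 D2 = D1 *: (fun u => X1 u / s u) + D2 *: (fun u => Y1 u / s u) by [].
set v := (X in is_derive _ _ _ X) in h.
suff -> : Wr t * (D2 * X1 t - D1 * Y1 t) / s t ^+ 3 = v by [].
rewrite /v /GRing.scale /=.
have S0 := speed_gt0 It.
move: (X1 t) (Y1 t) (Wr t) (s t) S0 => A B W S S0.
by field; rewrite gt_eqF.
Qed.


Definition kk u := `|curvature x y u| * s u.

Lemma curvE : curvature x y = fun u => Wr u / s u ^+ 3.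
Proof. by apply/funext => u; rewrite /curvature /Wr !d2E. Qed.

Lemma kE t : I t -> kk t = `|Wr t| / s t ^+ 2.
Proof.
move=> It; have S0 := speed_gt0 It.
rewrite /kk curvE normrM normfV normrX (gtr0_norm S0).
by field; rewrite gt_eqF.
Qed.

Lemma cX1 t : I t -> {for t, continuous X1}. Proof. by move=> It; apply/cont_of_der/ddx. Qed.
Lemma cY1 t : I t -> {for t, continuous Y1}. Proof. by move=> It; apply/cont_of_der/ddy. Qed.
Lemma cx t : I t -> {for t, continuous x}. Proof. by move=> It; apply/cont_of_der/dx. Qed.
Lemma cy t : I t -> {for t, continuous y}. Proof. by move=> It; apply/cont_of_der/dy. Qed.
Lemma cs t : I t -> {for t, continuous s}.
Proof. by move=> It; apply/cont_of_der; case: (isds It). Qed.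

Lemma cWr t : I t -> {for t, continuous Wr}.
Proof.
move=> It; apply: cvgB; apply: cvgM.
- exact: cX1.
- exact: cddy.
- exact: cY1.
- exact: cddx.
Qed.

Lemma ckk t : I t -> {for t, continuous kk}.
Proof.
move=> It; rewrite /kk curvE; apply: cvgM; last exact: cs.
apply: cvg_norm; apply: cvgM; first exact: cWr.
apply: cvgV; first by rewrite expf_neq0 // gt_eqF // speed_gt0.
apply: (@continuous_comp _ _ _ s (fun v => v ^+ 3)); first exact: cs.
exact: exprn_continuous.
Qed.

Lemma kk_ge0 t : 0 <= kk t.
Proof. by rewrite /kk mulr_ge0 // /speed sqrtr_ge0. Qed.

Lemma gd_bound D1 D2 t : I t ->
  `|Wr t * (D2 * X1 t - D1 * Y1 t) / s t ^+ 3| <= Num.sqrt (D1 ^+ 2 + D2 ^+ 2) * kk t.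
Proof.
move=> It; have S0 := speed_gt0 It.
rewrite (kE It) !normrM normfV normrX (gtr0_norm S0).
have h : `|D2 * X1 t - D1 * Y1 t| <= Num.sqrt (D1 ^+ 2 + D2 ^+ 2) * s t.
  rewrite -sqrtr_sqr sE -sqrtrM ?addr_ge0 ?sqr_ge0 //.
  rewrite ler_wsqrtr //.
  rewrite -subr_ge0.
  have -> : (D1 ^+ 2 + D2 ^+ 2) * (X1 t ^+ 2 + Y1 t ^+ 2) - (D2 * X1 t - D1 * Y1 t) ^+ 2
    = (D1 * X1 t + D2 * Y1 t) ^+ 2 by ring.
  exact: sqr_ge0.
have -> : `|Wr t| * `|D2 * X1 t - D1 * Y1 t| / s t ^+ 3 =
  (`|Wr t| / s t ^+ 3) * `|D2 * X1 t - D1 * Y1 t| by rewrite mulrAC.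
apply: le_trans (ler_wpM2l _ h) _; first by rewrite divr_ge0 // exprn_ge0 // ltW.
rewrite le_eqVlt; apply/orP; left; apply/eqP; field; rewrite gt_eqF //.
Qed.


Notation mu := (@lebesgue_measure R).

Lemma sub_ab a b t : I a -> I b -> t \in `[a, b] -> I t.
Proof.
move=> Ia Ib; rewrite in_itv /= => /andP[aLt tb].
by apply: (I_itv Ia Ib); rewrite aLt tb.
Qed.

Lemma within_ab (f : R -> R) a b : I a -> I b ->
  (forall t, I t -> {for t, continuous f}) -> {within `[a, b], continuous f}.
Proof.
move=> Ia Ib cf; apply: continuous_in_subspaceT => t; rewrite inE => tab.
by apply: cf; apply: sub_ab tab.
Qed.

Lemma int_kk a b : I a -> I b -> mu.-integrable `[a, b] (EFin \o kk).
Proof.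
move=> Ia Ib; apply: continuous_compact_integrable; first exact: segment_compact.
by apply: within_ab => // t It; apply: ckk.
Qed.

Definition Fk a u := (\int[mu]_(t in `[a, u]) kk t)%R.

Lemma Fk_cont a b : I a -> I b -> a <= b -> {within `[a, b], continuous (Fk a)}.
Proof. by move=> Ia Ib ab; apply: parameterized_integral_continuous => //; apply: int_kk. Qed.

Lemma Fk_der a b t : I a -> I b -> t \in `]a, b[ -> is_derive t 1 (Fk a) (kk t).
Proof.
move=> Ia Ib; rewrite in_itv /= => /andP[aLt tb].
have It : I t by apply: (sub_ab Ia Ib); rewrite in_itv /= !ltW.
have [h1 h2] := @continuous_FTC1_closed R kk a t b tb (int_kk Ia Ib) aLt (ckk It).
by rewrite -h2 derive1E; apply: derivableP.
Qed.

Lemma Fk_a a : Fk a a = 0.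
Proof. by rewrite /Fk set_itv1 Rintegral_set1. Qed.

Lemma Fk_ndecr a b : I a -> I b -> a <= b ->
  forall u v, a <= u -> u <= v -> v <= b -> Fk a u <= Fk a v.
Proof.
move=> Ia Ib ab; apply: ger0_derive1_ndecr.
- by move=> t tab; case: (Fk_der Ia Ib tab).
- by move=> t tab; rewrite derive1E; case: (Fk_der Ia Ib tab) => _ ->; rewrite kk_ge0.
- exact: Fk_cont.
Qed.


Lemma cgD D1 D2 t : I t -> {for t, continuous (gD D1 D2)}.
Proof. by move=> It; apply: cont_of_der; case: (isdg D1 D2 It). Qed.

Lemma h_der a b D1 D2 r u : I a -> I b -> u \in `]a, b[ ->
  is_derive u 1 (fun w => gD D1 D2 w + r * Fk a w)
    (Wr u * (D2 * X1 u - D1 * Y1 u) / s u ^+ 3 + r * kk u).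
Proof.
move=> Ia Ib uab.
have Iu : I u by apply: (sub_ab Ia Ib); apply: subset_itv_oo_cc.
have h := is_deriveD (isdg D1 D2 Iu) (is_deriveZ r (Fk_der Ia Ib uab)).
have -> : (fun w => gD D1 D2 w + r * Fk a w) = gD D1 D2 + r *: Fk a by [].
exact: h.
Qed.

Lemma h_cont a b c t D1 D2 r : I a -> I b -> a <= c -> c <= t -> t <= b ->
  {within `[c, t], continuous (fun w => gD D1 D2 w + r * Fk a w)}.
Proof.
move=> Ia Ib ac ct tb.
have sub : `[c, t] `<=` `[a, b].
  by apply: subset_itv; rewrite bnd_simp.
have cg := continuous_subspaceW sub (within_ab Ia Ib (@cgD D1 D2)).
have cF := continuous_subspaceW sub (Fk_cont Ia Ib (le_trans ac (le_trans ct tb))).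
move=> z; apply: continuousD; first exact: cg.
apply: continuousM; first exact: cst_continuous.
exact: cF.
Qed.

Lemma L_up a b c t D1 D2 : I a -> I b -> a <= c -> c <= t -> t <= b ->
  gD D1 D2 t - gD D1 D2 c <= Num.sqrt (D1 ^+ 2 + D2 ^+ 2) * (Fk a t - Fk a c).
Proof.
move=> Ia Ib ac ct tb.
set r := Num.sqrt (D1 ^+ 2 + D2 ^+ 2).
have sub : forall u, u \in `]c, t[ -> u \in `]a, b[.
  move=> u; rewrite !in_itv /= => /andP[cu ut].
  by rewrite (le_lt_trans ac cu) (lt_le_trans ut tb).
have := @ler0_derive1_nincr R (fun w => gD D1 D2 w + (- r) * Fk a w) c t.
move=> /(_ _ _ (h_cont Ia Ib ac ct tb) c t (lexx c) ct (lexx t)).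
rewrite -subr_ge0 => H.
suff : 0 <= r * (Fk a t - Fk a c) - (gD D1 D2 t - gD D1 D2 c) by rewrite subr_ge0.
have -> : r * (Fk a t - Fk a c) - (gD D1 D2 t - gD D1 D2 c) =
  gD D1 D2 c + - r * Fk a c - (gD D1 D2 t + - r * Fk a t) by ring.
apply: H.
- by move=> u /sub uab; case: (@h_der a b D1 D2 (- r) u Ia Ib uab).
- move=> u /sub uab.
  have Iu : I u by apply: (sub_ab Ia Ib); apply: subset_itv_oo_cc.
  rewrite derive1E; case: (@h_der a b D1 D2 (- r) u Ia Ib uab) => _ ->.
  rewrite mulNr subr_le0; apply: le_trans (ler_norm _) _.
  exact: gd_bound.
Qed.

Lemma L_dn a b c t D1 D2 : I a -> I b -> a <= t -> t <= c -> c <= b ->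
  gD D1 D2 t - gD D1 D2 c <= Num.sqrt (D1 ^+ 2 + D2 ^+ 2) * (Fk a c - Fk a t).
Proof.
move=> Ia Ib aLt tc cb.
set r := Num.sqrt (D1 ^+ 2 + D2 ^+ 2).
have sub : forall u, u \in `]t, c[ -> u \in `]a, b[.
  move=> u; rewrite !in_itv /= => /andP[cu ut].
  by rewrite (le_lt_trans aLt cu) (lt_le_trans ut cb).
have := @ger0_derive1_ndecr R (fun w => gD D1 D2 w + r * Fk a w) t c.
move=> /(_ _ _ (h_cont Ia Ib aLt tc cb) t c (lexx t) tc (lexx c)).
rewrite -subr_ge0 => H.
suff : 0 <= r * (Fk a c - Fk a t) - (gD D1 D2 t - gD D1 D2 c) by rewrite subr_ge0.
have -> : r * (Fk a c - Fk a t) - (gD D1 D2 t - gD D1 D2 c) =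
  gD D1 D2 c + r * Fk a c - (gD D1 D2 t + r * Fk a t) by ring.
apply: H.
- by move=> u /sub uab; case: (@h_der a b D1 D2 r u Ia Ib uab).
- move=> u /sub uab.
  have Iu : I u by apply: (sub_ab Ia Ib); apply: subset_itv_oo_cc.
  rewrite derive1E; case: (@h_der a b D1 D2 r u Ia Ib uab) => _ ->.
  rewrite addrC -lerBlDr sub0r; apply: le_trans (gd_bound D1 D2 Iu).
  by rewrite -normrN ler_norm.
Qed.


Lemma unitT t : I t -> (X1 t / s t) ^+ 2 + (Y1 t / s t) ^+ 2 = 1.
Proof.
move=> It; have S0 := speed_gt0 It; have S2 := s2E It.
by rewrite !expr_div_n -mulrDl -S2 divff // gt_eqF // exprn_gt0.
Qed.

Lemma pi_lt4 : pi < 4 :> R.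
Proof. by have := @pihalf_lt2 R; lra. Qed.

Lemma N_small (N r : R) : 0 <= N -> r = Num.sqrt N -> N <= r * (pi / 8) -> N <= 1 / 4.
Proof.
move=> N0 rE H.
have r0 : 0 <= r by rewrite rE sqrtr_ge0.
have rN : r ^+ 2 = N by rewrite rE sqr_sqrtr.
have p4 := pi_lt4.
have p0 : 0 < pi :> R by exact: pi_gt0.
rewrite -rN in H *.
have : r <= 1 / 2.
  case: (ltrP 0 r) => r0'; last by lra.
  have : r <= pi / 8.
    by rewrite -(ler_pM2l r0') -expr2.
  lra.
by nra.
Qed.

Lemma dir_bound a b : I a -> I b -> a <= b -> Fk a b <= pi / 4 ->
  exists2 e : R * R, e.1 ^+ 2 + e.2 ^+ 2 = 1 &
    forall t, t \in `[a, b] -> 7 / 8 * s t <= e.1 * X1 t + e.2 * Y1 t.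
Proof.
move=> Ia Ib ab Fb.
have F0b : 0 <= Fk a b.
  by rewrite -(Fk_a a); apply: (Fk_ndecr Ia Ib ab) => //.
have [c cab Fc] : exists2 c, c \in `[a, b] & Fk a c = Fk a b / 2.
  apply: IVT => //; first exact: Fk_cont.
  rewrite Fk_a ge_min le_max; apply/andP; split; apply/orP; [left|right]; lra.
have Ic : I c := sub_ab Ia Ib cab.
move: (cab); rewrite in_itv /= => /andP[ac cb].
exists (X1 c / s c, Y1 c / s c); first exact: unitT.
move=> t tab /=.
have It : I t := sub_ab Ia Ib tab.
move: (tab); rewrite in_itv /= => /andP[aLt tb].
set D1 := X1 t / s t - X1 c / s c.
set D2 := Y1 t / s t - Y1 c / s c.
have Fat : 0 <= Fk a t by rewrite -(Fk_a a); apply: (Fk_ndecr Ia Ib ab).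
have Ftb : Fk a t <= Fk a b by apply: (Fk_ndecr Ia Ib ab).
have key : gD D1 D2 t - gD D1 D2 c <= Num.sqrt (D1 ^+ 2 + D2 ^+ 2) * (pi / 8).
  have r0 := sqrtr_ge0 (D1 ^+ 2 + D2 ^+ 2).
  case: (leP c t) => [ct | tc].
  - apply: le_trans (L_up D1 D2 Ia Ib ac ct tb) _; apply: ler_wpM2l => //; lra.
  - apply: le_trans (L_dn D1 D2 Ia Ib aLt (ltW tc) cb) _; apply: ler_wpM2l => //; lra.
have gdiff : gD D1 D2 t - gD D1 D2 c = D1 ^+ 2 + D2 ^+ 2.
  rewrite /gD /D1 /D2.
  move: (X1 t / s t) (Y1 t / s t) (X1 c / s c) (Y1 c / s c) => A B C D; ring.
rewrite gdiff in key.
have Nsm := N_small (addr_ge0 (sqr_ge0 D1) (sqr_ge0 D2)) erefl key.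
have U1 := unitT It; have U0 := unitT Ic.
have S0 := speed_gt0 It.
have -> : X1 c / s c * X1 t + Y1 c / s c * Y1 t =
   s t * ((X1 c / s c) * (X1 t / s t) + (Y1 c / s c) * (Y1 t / s t)).
  move: (X1 c / s c) (Y1 c / s c) => A B.
  by field; rewrite gt_eqF.
rewrite [X in X <= _]mulrC ler_pM2l //.
move: U1 U0 Nsm; rewrite /D1 /D2.
move: (X1 t / s t) (Y1 t / s t) (X1 c / s c) (Y1 c / s c) => A B C D U1 U0 Nsm.
have E : (A - C) ^+ 2 + (B - D) ^+ 2 = (A ^+ 2 + B ^+ 2) + (C ^+ 2 + D ^+ 2) - 2 * (C * A + D * B) by ring.
rewrite E U1 U0 in Nsm.
lra.
Qed.


Lemma cont_near (f g : R -> R) t : I t -> (forall u, I u -> f u = g u) ->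
  {for t, continuous g} -> {for t, continuous f}.
Proof.
move=> It fg cg; rewrite /prop_for /continuous_at (fg t It).
apply: cvg_trans _ cg; apply: near_eq_cvg.
near=> u; apply/esym/fg; near: u; exact: I_near.
Unshelve. all: by end_near.
Qed.

Lemma isdx t : I t -> is_derive t 1 x (X1 t).
Proof. by move=> It; rewrite derive1E; apply: derivableP; exact: dx. Qed.
Lemma isdy t : I t -> is_derive t 1 y (Y1 t).
Proof. by move=> It; rewrite derive1E; apply: derivableP; exact: dy. Qed.

Section Phi.
Variables (e1 e2 p q c : R).

Definition Phi t := c^-1 * (e1 * x t + e2 * y t - (e1 * p + e2 * q)).
Definition dPhi t := c^-1 * (e1 * X1 t + e2 * Y1 t).

Lemma isdPhi t : I t -> is_derive t 1 Phi (dPhi t).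
Proof.
move=> It.
have h := is_deriveZ (c^-1) (is_deriveB (is_deriveD (is_deriveZ e1 (isdx It))
  (is_deriveZ e2 (isdy It))) (is_derive_cst (e1 * p + e2 * q) t 1)).
have -> : Phi = c^-1 *: (e1 *: x + e2 *: y - cst (e1 * p + e2 * q)) by [].
set v := (X in is_derive _ _ _ X) in h.
suff -> : dPhi t = v by [].
by rewrite /v /dPhi /GRing.scale /= subr0.
Qed.

Lemma Phi'E t : I t -> derive1 Phi t = dPhi t.
Proof. by move=> It; rewrite derive1E; case: (isdPhi It). Qed.

Lemma cdPhi t : I t -> {for t, continuous dPhi}.
Proof.
move=> It; apply: cvgM; first exact: cvg_cst.
apply: cvgD; apply: cvgM; (try exact: cvg_cst).
- exact: cX1.
- exact: cY1.
Qed.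

Lemma cPhi' t : I t -> {for t, continuous (derive1 Phi)}.
Proof. move=> It; apply: (cont_near It Phi'E); exact: cdPhi. Qed.

Lemma cPhi t : I t -> {for t, continuous Phi}.
Proof. by move=> It; apply: cont_of_der; case: (isdPhi It). Qed.

End Phi.


Lemma pt_alg (e1 e2 u v S L c lam : R) : e1 ^+ 2 + e2 ^+ 2 = 1 -> 0 < lam ->
  c = Num.sqrt (4 * lam) -> 0 <= S -> 7 / 8 * S <= L ->
  expR (- ((u ^+ 2 + v ^+ 2) / (4 * lam))) * S <=
  8 / 7 * c * (expR (- (c^-1 * (e1 * u + e2 * v)) ^+ 2) * (c^-1 * L)).
Proof.
move=> e_u l0 cE S0 SL.
have l4 : 0 < 4 * lam by rewrite mulr_gt0.
have c0 : 0 < c by rewrite cE sqrtr_gt0.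
have c2 : c ^+ 2 = 4 * lam by rewrite cE sqr_sqrtr // ltW.
have -> : 8 / 7 * c * (expR (- (c^-1 * (e1 * u + e2 * v)) ^+ 2) * (c^-1 * L)) =
   expR (- ((e1 * u + e2 * v) ^+ 2 / (4 * lam))) * (8 / 7 * L).
  have -> : (c^-1 * (e1 * u + e2 * v)) ^+ 2 = (e1 * u + e2 * v) ^+ 2 / (4 * lam).
    by rewrite exprMn exprVn c2 mulrC.
  move: (expR _) => E.
  by field; rewrite gt_eqF.
apply: ler_pM.
- exact: expR_ge0.
- exact: S0.
- rewrite ler_expR lerN2 ler_pM2r ?invr_gt0 //.
  rewrite -subr_ge0.
  have -> : u ^+ 2 + v ^+ 2 - (e1 * u + e2 * v) ^+ 2 =
    (u ^+ 2 + v ^+ 2) * (1 - (e1 ^+ 2 + e2 ^+ 2)) + (e2 * u - e1 * v) ^+ 2 by ring.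
  by rewrite e_u subrr mulr0 add0r sqr_ge0.
- lra.
Qed.

Definition Gf p q lam t :=
  expR (- (((x t - p) ^+ 2 + (y t - q) ^+ 2) / (4 * lam))) * s t.

Lemma Gf_ge0 p q lam t : 0 <= Gf p q lam t.
Proof. by rewrite /Gf mulr_ge0 // ?expR_ge0 // /speed sqrtr_ge0. Qed.

Lemma cGf p q lam t : I t -> {for t, continuous (Gf p q lam)}.
Proof.
move=> It; apply: cvgM; last exact: cs.
apply: (@continuous_comp _ _ _ (fun u => - (((x u - p) ^+ 2 + (y u - q) ^+ 2) / (4 * lam))) expR); last exact: continuous_expR.
apply: cvgN; apply: cvgM; last exact: cvg_cst.
apply: cvgD.
- apply: (@continuous_comp _ _ _ (fun u => x u - p) (fun v => v ^+ 2)); last exact: exprn_continuous.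
  by apply: cvgB; [exact: cx|exact: cvg_cst].
- apply: (@continuous_comp _ _ _ (fun u => y u - q) (fun v => v ^+ 2)); last exact: exprn_continuous.
  by apply: cvgB; [exact: cy|exact: cvg_cst].
Qed.


Lemma compact_bound p q lam a b : 0 < lam -> I a -> I b -> a <= b ->
  Fk a b <= pi / 4 ->
  (\int[mu]_(t in `[a, b]) (Gf p q lam t)%:E <=
     (8 / 7 * Num.sqrt (4 * lam) * Num.sqrt pi)%:E)%E.
Proof.
move=> l0 Ia Ib ab Fb.
have [[e1 e2] /= e_u e_bd] := dir_bound Ia Ib ab Fb.
set c := Num.sqrt (4 * lam).
have c0 : 0 < c by rewrite sqrtr_gt0 mulr_gt0.
set P := Phi e1 e2 p q c.
have Iab : forall t, t \in `[a, b] -> I t := fun t => sub_ab Ia Ib.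
have Ioo : forall t, t \in `]a, b[ -> t \in `[a, b].
  by move=> t tab; apply: subset_itv_oo_cc.
have dpos : forall t, t \in `[a, b] -> 0 < dPhi e1 e2 c t.
  move=> t tab; rewrite /dPhi mulr_gt0 ?invr_gt0 //.
  apply: lt_le_trans (e_bd t tab).
  by apply: mulr_gt0 => //; exact: speed_gt0 (Iab t tab).
have incr : {in `[a, b] &, {homo P : u v / u < v}}.
  move=> u v; rewrite !in_itv /= => /andP[au ub] /andP[av vb] uv.
  apply: (@gtr0_derive1_incr _ P a b) => //.
  - by move=> t /Ioo /Iab It; case: (isdPhi e1 e2 p q c It).
  - by move=> t /Ioo tab; rewrite (Phi'E e1 e2 p q c (Iab t tab)) dpos.
  - by apply: within_ab => // t It; apply: cPhi.
have subst := @integration_by_substitution_increasing R P gauss_fun a b ab incr.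
have cP' : {in `]a, b[, continuous (derive1 P)}.
  by move=> t /Ioo /Iab It; apply: cPhi'.
have L1 : cvg ((derive1 P) t @[t --> a^'+]).
  by apply/cvg_ex; exists (derive1 P a); apply: cvg_at_right_filter; apply: cPhi'.
have L2 : cvg ((derive1 P) t @[t --> b^'-]).
  by apply/cvg_ex; exists (derive1 P b); apply: cvg_at_left_filter; apply: cPhi'.
have dP : derivable_oo_LRcontinuous P a b.
  split.
  - by move=> t /Ioo /Iab It; case: (isdPhi e1 e2 p q c It).
  - by apply: cvg_at_right_filter; apply: cPhi.
  - by apply: cvg_at_left_filter; apply: cPhi.
have cG : {within `[P a, P b], continuous gauss_fun}.
  by apply: continuous_subspaceT; exact: continuous_gauss_fun.
have E := subst cP' L1 L2 dP cG.
have E' : (\int[mu]_(t in `[a, b]) (gauss_fun (P t) * derive1 P t)%:E =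
           \int[mu]_(t in `[P a, P b]) (gauss_fun t)%:E)%E := esym E.
have cI : forall t, I t -> {for t, continuous (fun t => gauss_fun (P t) * derive1 P t)}.
  move=> t It; apply: cvgM; last exact: cPhi'.
  apply: (@continuous_comp _ _ _ P gauss_fun); first exact: cPhi.
  exact: continuous_gauss_fun.
have I0 : forall t, t \in `[a, b] -> 0 <= gauss_fun (P t) * derive1 P t.
  move=> t tab; rewrite mulr_ge0 ?gauss_fun_ge0 //.
  by rewrite (Phi'E e1 e2 p q c (Iab t tab)) ltW // dpos.
apply: (@le_trans _ _ (\int[mu]_(t in `[a, b])
    ((8 / 7 * c) * (gauss_fun (P t) * derive1 P t))%:E)%E).
  apply: ge0_le_integral => //.
  - by move=> t _; rewrite lee_fin Gf_ge0.
  - apply/measurable_EFinP; apply: subspace_continuous_measurable_fun => //.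
    by apply: within_ab => // t It; apply: cGf.
  - apply/measurable_EFinP; apply: subspace_continuous_measurable_fun => //.
    apply: within_ab => // t It; apply: cvgM; first exact: cvg_cst.
    exact: cI.
  - move=> t tab; rewrite lee_fin.
    have It : I t := Iab t tab.
    rewrite (Phi'E e1 e2 p q c It) /dPhi /gauss_fun.
    have -> : P t = c^-1 * (e1 * (x t - p) + e2 * (y t - q)).
      by rewrite /P /Phi; congr (_ * _); ring.
    rewrite /Gf; apply: pt_alg => //.
    + by rewrite /speed sqrtr_ge0.
    + exact: e_bd.
under eq_integral => t _ do rewrite EFinM.
have h10 : forall t, [set` `[a, b]] t -> (0 <= (gauss_fun (P t) * derive1 P t)%:E)%E.
  by move=> t tab; rewrite lee_fin I0.
have hm1 : measurable_fun `[a, b] (fun t => (gauss_fun (P t) * derive1 P t)%:E).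
  apply/measurable_EFinP; apply: subspace_continuous_measurable_fun => //.
  by apply: within_ab => // t It; apply: cI.
have k0 : 0 <= 8 / 7 * c by rewrite mulr_ge0 // ltW.
rewrite ge0_integralZl_EFin //.
rewrite E' (EFinM (8 / 7 * c) (Num.sqrt pi)); apply: lee_wpmul2l; first by rewrite lee_fin.
rewrite -integralT_gauss; apply: ge0_subset_integral => //.
- by apply/measurable_EFinP; exact: measurable_gauss_fun.
- by move=> t _; rewrite lee_fin gauss_fun_ge0.
Qed.


Lemma meas_I (f : R -> R) : (forall t, I t -> {for t, continuous f}) -> measurable_fun I f.
Proof.
move=> cf; apply: subspace_continuous_measurable_fun; first exact: I_meas.
by apply: continuous_in_subspaceT => t; rewrite inE => It; apply: cf.
Qed.

Lemma Fk_le a b : I a -> I b -> a <= b ->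
  (total_curvature I x y <= (pi / 4)%:E)%E -> Fk a b <= pi / 4.
Proof.
move=> Ia Ib ab TC.
have le1 : (\int[mu]_(t in `[a, b]) (kk t)%:E <= total_curvature I x y)%E.
  rewrite /total_curvature; apply: ge0_subset_integral => //.
  - exact: I_meas.
  - by apply/measurable_EFinP; apply: meas_I => t It; apply: ckk.
  - by move=> t _; rewrite lee_fin kk_ge0.
  - by move=> t tab; apply: (sub_ab Ia Ib).
have ge0 : (0 <= \int[mu]_(t in `[a, b]) (kk t)%:E)%E.
  by apply: integral_ge0 => t _; rewrite lee_fin kk_ge0.
have := le_trans le1 TC; rewrite /Fk /Rintegral.
move: ge0; case: (\int[mu]_(t in `[a, b]) (kk t)%:E)%E => //= r.
Qed.

End Basic.

Theorem lemma3p2 (R : realType) (I : set R) (x y : R -> R) :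
  C2_immersed_curve I x y ->
  (total_curvature I x y <= (pi / 4)%:E)%E ->
  (Ent I x y <= (Num.sqrt 2)%:E)%E.
Proof.
move=> HC TC; rewrite /Ent; apply: ub_ereal_sup => _ [p [q [lam [l0 ->]]]].
rewrite /Ffun.
have C0 : 0 <= 8 / 7 * Num.sqrt (4 * lam) * Num.sqrt pi.
  by rewrite !mulr_ge0 ?sqrtr_ge0.
have B : (\int[lebesgue_measure]_(t in I) (Gf x y p q lam t)%:E <=
    (8 / 7 * Num.sqrt (4 * lam) * Num.sqrt pi)%:E)%E.
  apply: (exhaust (I_open HC) (I_itv HC)).
  - by move=> t _; apply: Gf_ge0.
  - by apply: (meas_I HC) => t It; apply: (cGf HC).
  - by rewrite lee_fin.
  - move=> a b Ia Ib ab; apply: (compact_bound HC) => //.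
    exact: (Fk_le HC).
have i0 : 0 <= (Num.sqrt (4 * pi * lam))^-1 by rewrite invr_ge0 sqrtr_ge0.
apply: le_trans (lee_wpmul2l _ B) _; first by rewrite lee_fin.
rewrite -EFinM lee_fin.
have -> : 4 * pi * lam = (4 * lam) * pi by ring.
have l4 : 0 < 4 * lam by rewrite mulr_gt0.
rewrite sqrtrM ?ltW //.
have s1 : 0 < Num.sqrt (4 * lam) by rewrite sqrtr_gt0.
have s2 : 0 < Num.sqrt (pi : R) by rewrite sqrtr_gt0; exact: pi_gt0.
have -> : (Num.sqrt (4 * lam) * Num.sqrt pi)^-1 * (8 / 7 * Num.sqrt (4 * lam) * Num.sqrt pi) = 8 / 7.
  by move: (Num.sqrt (4 * lam)) (Num.sqrt pi) s1 s2 => u v u0 v0; field; rewrite !gt_eqF.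
have e : 8 / 7 = Num.sqrt ((8 / 7) ^+ 2) :> R by rewrite sqrtr_sqr ger0_norm // divr_ge0.
rewrite {1}e.
by rewrite ?ler_sqrt ?ltr_sqrt //; lra.
Qed.
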